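(* Let $G$ be a connected graph with $\delta(G)=1$, girth at least $15$, and $G\in\mathcal U$. Then no two single star support vertices of $G$ are at distance exactly $4$.
   Context: All graphs are finite and simple. A set $P\subseteq V(G)$ is an open packing if no two distinct vertices of $P$ have a common neighbor; it is maximal if maximal under inclusion among open packings. $\rho^o(G)$ is the maximum size of an open packing and $\rho^o_L(G)$ the minimum size of a maximal open packing; $\mathcal U$ is the class of graphs with $\rho^o_L(G)=\rho^o(G)$. A leaf is a vertex of degree $1$; a support vertex is a vertex adjacent to at least one leaf. A single star support vertex is a support vertex not adjacent to any other support vertex. *)

(* Defs.v *)
From mathcomp Require Import all_boot.
Set Implicit Arguments. Unset Strict Implicit. Unset Printing Implicit Defensive.

(* A finite simple graph: vertex type T : finType, adjacency e : rel T,
   assumed symmetric and irreflexive (hypotheses in the theorem). *)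
Section Graph.
Variables (T : finType) (e : rel T).

Definition nbhd (v : T) : {set T} := [set u | e v u].
Definition deg (v : T) : nat := #|nbhd v|.

Definition open_packingb (P : {set T}) : bool :=
  [forall x in P, forall y in P, (x != y) ==> [disjoint nbhd x & nbhd y]].

Definition maximal_open_packingb (P : {set T}) : bool :=
  open_packingb P &&
  [forall Q : {set T}, (open_packingb Q && (P \subset Q)) ==> (Q == P)].

Definition rho_o : nat := \max_(P : {set T} | open_packingb P) #|P|.

(* rho^o_L(G): minimum size of a maximal open packing
   (#|T| is a harmless upper default, maximal open packings always exist) *)
Definition rho_oL : nat :=
  \big[minn/#|T|]_(P : {set T} | maximal_open_packingb P) #|P|.

Definition in_U : Prop := rho_oL = rho_o.

Definition connected : Prop := forall x y : T, connect e x y.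

Definition min_degree_one : Prop :=
  (forall v, 1 <= deg v) /\ (exists v, deg v = 1).

(* girth at least g: every cycle (sequence of >= 3 distinct vertices,
   consecutive ones adjacent, last adjacent to first) has length >= g.
   Acyclic graphs (infinite girth) satisfy this. *)
Definition girth_at_least (g : nat) : Prop :=
  forall c : seq T, uniq c -> cycle e c -> 3 <= size c -> g <= size c.

Definition leaf (v : T) : bool := deg v == 1.
Definition support (v : T) : bool := [exists u, e v u && leaf u].
Definition single_star_support (v : T) : bool :=
  support v && [forall u, e v u ==> ~~ support u].

Definition dist_eq (x y : T) (k : nat) : Prop :=
  (exists p : seq T, [/\ path e x p, last x p = y & size p = k]) /\
  (forall p : seq T, path e x p -> last x p = y -> k <= size p).

End Graph.

(* Main.v *)
Require Import Defs.
From mathcomp Require Import all_boot zify.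
Set Implicit Arguments. Unset Strict Implicit. Unset Printing Implicit Defensive.

Section Infra.
Variables (T : finType) (e : rel T).
Hypothesis esym : symmetric e.
Hypothesis eirr : irreflexive e.

Definition conf (x y : T) := (x != y) && [exists k, e x k && e y k].

Lemma confC x y : conf x y = conf y x.
Proof.
rewrite /conf eq_sym; congr (_ && _); apply/existsP/existsP => -[k /andP[H1 H2]];
by exists k; rewrite H1 H2.
Qed.

Lemma confI x y k : x != y -> e x k -> e y k -> conf x y.
Proof. by move=> H1 H2 H3; rewrite /conf H1; apply/existsP; exists k; rewrite H2 H3. Qed.

Lemma confE x y : conf x y -> x != y /\ exists k, e x k /\ e y k.
Proof. by case/andP=> H /existsP[k /andP[H1 H2]]; split => //; exists k. Qed.

Lemma disjN x y : [disjoint nbhd e x & nbhd e y] = ~~ [exists k, e x k && e y k].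
Proof.
rewrite disjoint_subset; apply/subsetP/existsPn.
  move=> H k; apply/negP => /andP[H1 H2].
  by have := H k; rewrite /nbhd !inE H1 H2 => /(_ isT).
move=> H k; rewrite /nbhd !inE => H1; apply/negP => H2.
by move: (H k); rewrite H1 H2.
Qed.

Lemma opP (P : {set T}) :
  reflect (forall x y, x \in P -> y \in P -> ~~ conf x y) (open_packingb e P).
Proof.
apply: (iffP idP).
  move=> /forall_inP H x y Hx Hy; move/forall_inP: (H x Hx) => /(_ y Hy).
  by rewrite /conf disjN; case: (x != y).
move=> H; apply/forall_inP => x Hx; apply/forall_inP => y Hy; apply/implyP => Hxy.
by move: (H x y Hx Hy); rewrite /conf Hxy disjN.
Qed.

Lemma ext_max (P : {set T}) : open_packingb e P ->
  exists S : {set T}, [/\ maximal_open_packingb e S, open_packingb e S & P \subset S].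
Proof.
move=> HP.
have HP' : (fun Q : {set T} => open_packingb e Q && (P \subset Q)) P by rewrite /= HP subxx.
case: (@arg_maxnP _ P (fun Q : {set T} => open_packingb e Q && (P \subset Q)) (fun Q : {set T} => #|Q|) HP') => S /andP[HS PS] Hmax.
exists S; split => //; rewrite /maximal_open_packingb HS /=.
apply/forallP => Q; apply/implyP => /andP[HQ SQ].
have := Hmax Q; rewrite HQ (subset_trans PS SQ) => /(_ isT) HQS.
by rewrite eq_sym eqEcard SQ; apply: HQS.
Qed.

Lemma bigmin_le_seq (I : eqType) (r : seq I) (F : I -> nat) m i0 :
  i0 \in r -> \big[minn/m]_(i <- r) F i <= F i0.
Proof.
elim: r => [|x r IH] //; rewrite big_cons inE => /orP[/eqP->|H].
  by apply: geq_minl.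
by apply: leq_trans (geq_minr _ _) (IH H).
Qed.

Lemma rhoL_le S : maximal_open_packingb e S -> rho_oL e <= #|S|.
Proof.
move=> HS; rewrite /rho_oL -big_filter; apply: bigmin_le_seq.
by rewrite mem_filter HS mem_index_enum.
Qed.

Lemma rho_ge S : open_packingb e S -> #|S| <= rho_o e.
Proof. by move=> HS; rewrite /rho_o; apply: leq_bigmax_cond. Qed.

Lemma notU_swap (P : {set T}) y x1 x2 : open_packingb e P -> y \in P ->
  conf y x1 -> conf y x2 -> ~~ conf x1 x2 -> x1 != x2 ->
  (forall z, conf x1 z -> z != y -> exists2 p, p \in P & conf z p) ->
  (forall z, conf x2 z -> z != y -> exists2 p, p \in P & conf z p) ->
  rho_oL e < rho_o e.
Proof.
move=> HP Hy H1 H2 H12 N12 B1 B2.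
case: (ext_max HP) => S [HSm HS PS].
have yS : y \in S by apply: (subsetP PS).
have x1S : x1 \notin S.
  by apply/negP => Hx; move/opP: HS => /(_ y x1 yS Hx); rewrite H1.
have x2S : x2 \notin S.
  by apply/negP => Hx; move/opP: HS => /(_ y x2 yS Hx); rewrite H2.
set S2 := (S :\ y) :|: [set x1; x2].
have HB : forall x, (forall z, conf x z -> z != y -> exists2 p, p \in P & conf z p) ->
    forall z, z \in S :\ y -> ~~ conf x z.
  move=> x B z; rewrite !inE => /andP[zy zS]; apply/negP => Hc.
  case: (B z Hc zy) => p pP Hzp.
  by move/opP: HS => /(_ z p zS (subsetP PS _ pP)); rewrite Hzp.
have HS2 : open_packingb e S2.
  apply/opP => x z; rewrite /S2 !inE.
  have HSy : forall x z, x \in S :\ y -> z \in S :\ y -> ~~ conf x z.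
    by move=> a b; rewrite !inE => /andP[_ Ha] /andP[_ Hb]; move/opP: HS => /(_ a b Ha Hb).
  move=> /orP[Hx|/orP[]/eqP->] /orP[Hz|/orP[]/eqP->].
  - by apply: HSy; rewrite in_setD1.
  - by rewrite confC; apply: (HB _ B1); rewrite in_setD1.
  - by rewrite confC; apply: (HB _ B2); rewrite in_setD1.
  - by apply: (HB _ B1); rewrite in_setD1.
  - by rewrite /conf eqxx.
  - by [].
  - by apply: (HB _ B2); rewrite in_setD1.
  - by rewrite confC.
  - by rewrite /conf eqxx.
have cS2 : #|S2| = #|S|.+1.
  rewrite /S2 cardsU.
  have -> : (S :\ y) :&: [set x1; x2] = set0.
    apply/setP => z; rewrite !inE; apply/negP => /andP[/andP[_ zS] /orP[]/eqP Ez];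
    by move: zS; rewrite Ez ?(negbTE x1S) ?(negbTE x2S).
  rewrite cards0 subn0 cards2 N12 (cardsD1 y S) yS.
  by rewrite addnC.
have := rhoL_le HSm; have := rho_ge HS2; rewrite cS2.
by move=> Ha Hb; apply: (leq_ltn_trans Hb); apply: leq_trans Ha.
Qed.

End Infra.

Section Walk.
Variables (T : finType) (e : rel T).
Hypothesis esym : symmetric e.
Hypothesis eirr : irreflexive e.
Hypothesis Hg : girth_at_least e 15.

Lemma pathf (f : nat -> T) n m : (forall k, m <= k -> k < m + n -> e (f k) (f k.+1)) ->
  path e (f m) (map f (iota m.+1 n)).
Proof.
elim: n m => [|n IH] m H //=; rewrite H ?leqnn ?addnS ?ltnS ?leq_addr //=.
by apply: IH => k Hk1 Hk2; apply: H; [apply: ltnW|rewrite addnS -addSn].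
Qed.

Lemma walkf (L : nat) (f : nat -> T) : 0 < L <= 14 -> f L = f 0 ->
  (forall k, k < L -> e (f k) (f k.+1)) -> (forall k, k.+2 <= L -> f k != f k.+2) -> False.
Proof.
elim/ltn_ind: L f => L IH f /andP[L0 L14] fL He Hn.
case: (boolP (uniq (mkseq f L))) => [Hu|/(uniqPn (f 0))[i [j [ij jL Eij]]]].
  have L3 : 3 <= L.
    rewrite ltnNge; apply/negP => HL.
    have : (L == 1) || (L == 2) by lia.
    case/orP=> /eqP EL; subst L.
      by move: (He 0 isT); rewrite fL eirr.
    by move: (Hn 0 isT); rewrite fL eqxx.
  have Hc : cycle e (mkseq f L).
    move: L0 fL He; clear IH Hu Hn L14 L3; case: L => [|n] // _ fL He.
    rewrite /mkseq -[n.+1]add1n iotaD map_cat /= -(cats1 _ (f 0)) -{2}fL.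
    have -> : map f (iota 1 n) ++ [:: f n.+1] = map f (iota 1 n.+1).
      have E : iota 1 n.+1 = iota 1 n ++ [:: 1 + n] by rewrite -[n.+1]addn1 iotaD.
      by rewrite E map_cat.

    by apply: pathf => k _ Hk; apply: He; rewrite add0n in Hk.
  have := Hg Hu Hc; rewrite size_mkseq => /(_ L3) H15.
  by move: L14; rewrite leqNgt (leq_trans _ H15).
rewrite size_mkseq in jL; rewrite !nth_mkseq ?(ltn_trans ij) // in Eij.
apply: (IH (j - i) _ (fun k => f (i + k))).
- by lia.
- by lia.
- by rewrite subnKC ?(ltnW ij) // addn0.
- by move=> k Hk; rewrite addnS; apply: He; lia.
- by move=> k Hk; rewrite !addnS; apply: Hn; lia.
Qed.

End Walk.

Section Walk2.
Variables (T : finType) (e : rel T).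
Hypothesis esym : symmetric e.
Hypothesis eirr : irreflexive e.
Hypothesis Hg : girth_at_least e 15.

Fixpoint nbt (l : seq T) : bool :=
  match l with
  | x :: ((_ :: z :: _) as l') => (x != z) && nbt l'
  | _ => true
  end.

Lemma nbtP (x0 : T) l : nbt l -> forall k, k.+2 < size l -> nth x0 l k != nth x0 l k.+2.
Proof.
elim: l => [|x l IH] //=.
case: l IH => [|y [|z r]] //= IH /andP[Hxz Hn] [|k] //= Hk.
by have := IH Hn k Hk.
Qed.

Lemma walk_seq (x : T) (p : seq T) : 0 < size p <= 14 -> path e x p -> last x p = x ->
  nbt (x :: p) -> False.
Proof.
move=> Hs Hp Hl Hn.
apply: (walkf eirr Hg (L := size p) (f := nth x (x :: p))) => //.
- case: (p) Hl => [|y q] //= <-; have := nth_last x (y :: q); rewrite /= => <-.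
  by apply: set_nth_default.
- by move=> k Hk; move/(pathP x): Hp => /(_ k Hk).
- by move=> k Hk; apply: nbtP.
Qed.

End Walk2.
Section G.
Variables (T : finType) (e : rel T).
Hypothesis esym : symmetric e.
Hypothesis eirr : irreflexive e.
Hypothesis Hg : girth_at_least e 15.

Ltac wk x p := apply: (walk_seq eirr Hg (x:=x) (p:=p)); [by []
  | rewrite /=; repeat (apply/andP; split); try (by []); try (by rewrite esym)
  | by []
  | rewrite /=; repeat (apply/andP; split); try (by []); try (by rewrite eq_sym) ].

Lemma G1 x y b w s m i : e x y -> e y b -> x != b -> e x w -> e w s -> e s m -> e m i ->
  m != w -> i != s -> w != y -> s != x -> s != b -> ~~ conf e s b -> i != b.
Proof.
move=> xy yb xb xw ws sm mi mw Hi wy sx sb Hsb; apply/eqP => ib; subst i.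
case: (eqVneq m y) => [my|my].
  by subst m; move: Hsb; rewrite (confI sb sm) // esym.
wk x [:: w; s; m; b; y; x].
Qed.

Lemma G2 x y b w s m i : e x y -> e y b -> x != b -> e x w -> e w s -> e s m -> e m i ->
  m != w -> i != s -> w != y -> s != x -> s != b -> ~~ conf e s b -> ~~ conf e i b.
Proof.
move=> xy yb xb xw ws sm mi mw Hi wy sx sb Hsb; apply/negP => /confE [ib [k [ik bk]]].
case: (eqVneq m k) => [E|mk].
  subst k; case: (eqVneq m y) => [my|my].
    by subst m; move: Hsb; rewrite (confI sb sm) // esym.
  wk x [:: w; s; m; b; y; x].
case: (eqVneq k y) => [E|ky].
  subst k; case: (eqVneq i x) => [E|ix].
    subst i; wk x [:: w; s; m; x].
  wk x [:: w; s; m; i; y; x].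
wk x [:: w; s; m; i; k; b; y; x].
Qed.

Lemma SL x w1 s1 m1 i1 w2 s2 m2 i2 :
  e x w1 -> e w1 s1 -> e s1 m1 -> e m1 i1 -> m1 != w1 -> i1 != s1 -> s1 != x ->
  e x w2 -> e w2 s2 -> e s2 m2 -> e m2 i2 -> m2 != w2 -> i2 != s2 -> s2 != x ->
  s1 != s2 -> e i2 m1 -> False.
Proof.
move=> xw1 ws1 sm1 mi1 mw1 Hi1 sx1 xw2 ws2 sm2 mi2 mw2 Hi2 sx2 s12 im.
case: (eqVneq s1 i2) => [E|si].
  subst i2; case: (eqVneq w1 m2) => [E|wm].
    subst m2; wk x [:: w1; s2; w2; x].
  wk x [:: w1; s1; m2; s2; w2; x].
case: (eqVneq m1 m2) => [E|mm].
  subst m2; case: (eqVneq m1 w2) => [E|mw].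
    subst w2; wk x [:: w1; s1; m1; x].
  wk x [:: w1; s1; m1; s2; w2; x].
wk x [:: w1; s1; m1; i2; m2; s2; w2; x].
Qed.

Lemma G3same x w1 s1 m1 i1 w2 s2 m2 i2 :
  e x w1 -> e w1 s1 -> e s1 m1 -> e m1 i1 -> m1 != w1 -> i1 != s1 -> s1 != x ->
  e x w2 -> e w2 s2 -> e s2 m2 -> e m2 i2 -> m2 != w2 -> i2 != s2 -> s2 != x ->
  s1 != s2 -> ~~ conf e i1 i2.
Proof.
move=> xw1 ws1 sm1 mi1 mw1 Hi1 sx1 xw2 ws2 sm2 mi2 mw2 Hi2 sx2 s12.
apply/negP => /confE [i12 [k [ik1 ik2]]].
case: (eqVneq m1 k) => [E|mk1].
  by subst k; apply: (SL xw1 ws1 sm1 mi1 mw1 Hi1 sx1 xw2 ws2 sm2 mi2 mw2 Hi2 sx2 s12).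
case: (eqVneq k m2) => [E|mk2].
  subst k; apply: (SL xw2 ws2 sm2 mi2 mw2 Hi2 sx2 xw1 ws1 sm1 mi1 mw1 Hi1 sx1 _ ik1).
  by rewrite eq_sym.
wk x [:: w1; s1; m1; i1; k; i2; m2; s2; w2; x].
Qed.

Lemma CL x y b y' x' w1 s1 m1 i1 w2 s2 m2 i2 :
  e x y -> e y b -> e b y' -> e y' x' -> x != b -> x' != b -> y != y' -> x != x' ->
  e x w1 -> e w1 s1 -> e s1 m1 -> e m1 i1 -> m1 != w1 -> i1 != s1 -> s1 != x ->
  e x' w2 -> e w2 s2 -> e s2 m2 -> e m2 i2 -> m2 != w2 -> i2 != s2 -> s2 != x' ->
  w2 != y' -> s1 != s2 -> e i2 m1 -> False.
Proof.
move=> xy yb by' y'x' xb x'b yy' xx' xw1 ws1 sm1 mi1 mw1 Hi1 sx1 xw2 ws2 sm2 mi2 mw2 Hi2 sx2 wy2 s12 im.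
case: (eqVneq s1 i2) => [E|si].
  subst i2; case: (eqVneq w1 m2) => [E|wm].
    subst m2; case: (eqVneq x s2) => [E|xs].
      subst s2; wk x [:: w2; x'; y'; b; y; x].
    case: (eqVneq w1 w2) => [E|ww].
      subst w2; wk x [:: w1; x'; y'; b; y; x].
    wk x [:: w1; s2; w2; x'; y'; b; y; x].
  wk x [:: w1; s1; m2; s2; w2; x'; y'; b; y; x].
case: (eqVneq m1 m2) => [E|mm].
  subst m2; case: (eqVneq m1 w2) => [E|mw].
    subst w2; case: (eqVneq s1 x') => [E|sx'].
      subst s1; case: (eqVneq w1 y') => [E|wy'].
        subst w1; wk x [:: y'; b; y; x].
      wk x [:: w1; x'; y'; b; y; x].
    wk x [:: w1; s1; m1; x'; y'; b; y; x].
  wk x [:: w1; s1; m1; s2; w2; x'; y'; b; y; x].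
wk x [:: w1; s1; m1; i2; m2; s2; w2; x'; y'; b; y; x].
Qed.

Lemma G3cross x y b y' x' w1 s1 m1 i1 w2 s2 m2 i2 :
  e x y -> e y b -> e b y' -> e y' x' -> x != b -> x' != b -> y != y' -> x != x' ->
  e x w1 -> e w1 s1 -> e s1 m1 -> e m1 i1 -> m1 != w1 -> i1 != s1 -> s1 != x ->
  e x' w2 -> e w2 s2 -> e s2 m2 -> e m2 i2 -> m2 != w2 -> i2 != s2 -> s2 != x' ->
  w1 != y -> w2 != y' -> s1 != s2 -> ~~ conf e i1 i2.
Proof.
move=> xy yb by' y'x' xb x'b yy' xx' xw1 ws1 sm1 mi1 mw1 Hi1 sx1 xw2 ws2 sm2 mi2 mw2 Hi2 sx2 wy1 wy2 s12.
apply/negP => /confE [i12 [k [ik1 ik2]]].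
case: (eqVneq m1 k) => [E|mk1].
  subst k; by apply: (CL xy yb by' y'x' xb x'b yy' xx' xw1 ws1 sm1 mi1 mw1 Hi1 sx1
     xw2 ws2 sm2 mi2 mw2 Hi2 sx2 wy2 s12).
case: (eqVneq k m2) => [E|mk2].
  subst k.
  have x'y' : e x' y' by rewrite esym.
  have y'b : e y' b by rewrite esym.
  have b_y : e b y by rewrite esym.
  have yx : e y x by rewrite esym.
  apply: (CL x'y' y'b b_y yx x'b xb _ _ xw2 ws2 sm2 mi2 mw2 Hi2 sx2
     xw1 ws1 sm1 mi1 mw1 Hi1 sx1 wy1 _ ik1); by rewrite eq_sym.
wk x [:: w1; s1; m1; i1; k; i2; m2; s2; w2; x'; y'; b; y; x].
Qed.
End G.

Section Main.
Variables (T : finType) (e : rel T).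
Hypothesis esym : symmetric e.
Hypothesis eirr : irreflexive e.
Hypothesis Hg : girth_at_least e 15.

Lemma leafE x y z : leaf e x -> e x y -> e x z -> y = z.
Proof.
move=> /cards1P [k Hk] Hy Hz.
have : y \in nbhd e x by rewrite inE.
have : z \in nbhd e x by rewrite inE.
by rewrite Hk !inE => /eqP-> /eqP->.
Qed.

Lemma deg2 x w : 1 < deg e x -> exists m, e x m /\ m != w.
Proof.
move=> Hd; case: (boolP [exists m, e x m && (m != w)]) => [/existsP[m /andP[H1 H2]]|H].
  by exists m.
have : nbhd e x \subset [set w].
  apply/subsetP => m; rewrite !inE => Hm; apply/negPn/negP => Hmw.
  by move/negP: H; apply; apply/existsP; exists m; rewrite Hm.
by move/subset_leq_card; rewrite cards1 => H1; move: Hd; rewrite /deg ltnNge H1.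
Qed.

Lemma caseX x w t : single_star_support e x -> e x w -> e w t -> t != x -> Defs.support e t ->
  rho_oL e < rho_o e.
Proof.
move=> /andP[/existsP[x' /andP[xx' lx']] _] xw wt tx /existsP[l /andP[tl ll]].
have x'x : e x' x by rewrite esym.
have lt : e l t by rewrite esym.
have wx : e w x by rewrite esym.
have wx' : w != x'.
  apply/eqP => E; subst w; by move/eqP: tx; apply; apply: (leafE lx' wt x'x).
have wl : w != l.
  apply/eqP => E; subst w; by move/eqP: tx; apply; apply: (leafE ll lt wx).
apply: (notU_swap (P := [set w]) (y := w) (x1 := x') (x2 := l)).
- by apply/opP => p q; rewrite !inE => /eqP-> /eqP->; rewrite /conf eqxx.
- by rewrite inE.
- exact: (confI wx' wx x'x).
- exact: (confI wl wt lt).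
- apply/negP => /confE [_ [k [H1 H2]]].
  have := leafE lx' H1 x'x; have := leafE ll H2 lt => -> E.
  by move: tx; rewrite E eqxx.
- apply/eqP => E; subst l.
  by move: tx; rewrite (leafE lx' lt x'x) eqxx.
- move=> z /confE [_ [k [H1 H2]]] zw; exists w; rewrite ?inE //.
  have Ek := leafE lx' H1 x'x; subst k.
  by apply: (confI zw H2); rewrite esym.
- move=> z /confE [_ [k [H1 H2]]] zw; exists w; rewrite ?inE //.
  have Ek := leafE ll H1 lt; subst k.
  exact: (confI zw H2).
Qed.

Lemma blk_ex x y b s : single_star_support e x -> (forall v, 1 <= deg e v) ->
  (forall w t, e x w -> e w t -> t != x -> ~~ Defs.support e t) ->
  e x y -> e y b -> conf e s x -> ~~ conf e s b -> s != b ->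
  exists w m i, [/\ e x w, e w s, e s m, e m i & [&& m != w, i != s, w != y & s != x]].
Proof.
move=> /andP[_ /forallP Hns] Hmd noX xy yb /confE [sx [w [sw xw]]] Hsb sb.
have wy : w != y.
  apply/eqP => E; subst w; move/negP: Hsb; apply; apply: (confI sb sw).
  by rewrite esym.
have ws : e w s by rewrite esym.
have nsw : ~~ Defs.support e w by move/implyP: (Hns w); apply.
have nls : ~~ leaf e s.
  apply/negP => ls; move/negP: nsw; apply; apply/existsP; exists s; by rewrite ws ls.
have [m [sm mw]] : exists m, e s m /\ m != w.
  apply: deg2; move: (Hmd s) nls; rewrite /leaf; case: (deg e s) => [|[|]] //.
have nss : ~~ Defs.support e s by apply: (noX w s xw ws sx).
have nlm : ~~ leaf e m.
  apply/negP => lm; move/negP: nss; apply; apply/existsP; exists m; by rewrite sm lm.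
have [i [mi Hi]] : exists i, e m i /\ i != s.
  apply: deg2; move: (Hmd m) nlm; rewrite /leaf; case: (deg e m) => [|[|]] //.
exists w, m, i; split => //; by rewrite mw Hi wy sx.
Qed.

Definition blk (x y s i : T) : bool :=
  [exists w, exists m, [&& e x w, e w s, e s m, e m i & [&& m != w, i != s, w != y & s != x]]].

Lemma blkP x y s i : blk x y s i -> exists w m,
  [/\ e x w, e w s, e s m, e m i & [/\ m != w, i != s, w != y & s != x]].
Proof.
move=> /existsP[w /existsP[m /and5P[H1 H2 H3 H4 /and4P[H5 H6 H7 H8]]]].
by exists w, m.
Qed.

End Main.

Section Final.
Variables (T : finType) (e : rel T).
Hypothesis esym : symmetric e.
Hypothesis eirr : irreflexive e.
Hypothesis Hg : girth_at_least e 15.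

Lemma final u a b c v : single_star_support e u -> single_star_support e v ->
  (forall v, 1 <= deg e v) ->
  (forall w t, e u w -> e w t -> t != u -> ~~ Defs.support e t) ->
  (forall w t, e v w -> e w t -> t != v -> ~~ Defs.support e t) ->
  e u a -> e a b -> e b c -> e c v -> u != b -> v != b -> a != c -> u != v ->
  ~~ conf e u v -> rho_oL e < rho_o e.
Proof.
move=> Hu Hv Hmd nXu nXv ua ab bc cv ub vb ac uv Huv.
have cb : e c b by rewrite esym.
have vc : e v c by rewrite esym.
have ba : e b a by rewrite esym.
have au : e a u by rewrite esym.
have ca : c != a by rewrite eq_sym.
have vu : v != u by rewrite eq_sym.
pose S := [set s | (conf e s u || conf e s v) && ~~ conf e s b && (s != b)].
pose Pb s i := blk e u a s i || blk e v c s i.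
have Hex : forall s, s \in S -> exists i, Pb s i.
  move=> s; rewrite inE => /andP[/andP[/orP[Hsu|Hsv] Hsb] sb].
    have [w [m [i [H1 H2 H3 H4 H5]]]] := blk_ex esym Hu Hmd nXu ua ab Hsu Hsb sb.
    exists i; apply/orP; left; apply/existsP; exists w; apply/existsP; exists m.
    by rewrite H1 H2 H3 H4 H5.
  have [w [m [i [H1 H2 H3 H4 H5]]]] := blk_ex esym Hv Hmd nXv vc cb Hsv Hsb sb.
  exists i; apply/orP; right; apply/existsP; exists w; apply/existsP; exists m.
  by rewrite H1 H2 H3 H4 H5.
pose f s := odflt s [pick i | Pb s i].
have Hf : forall s, s \in S -> Pb s (f s).
  move=> s /Hex [i Hi]; rewrite /f; case: pickP => [j Hj|H] //=.
  by rewrite H in Hi.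
have HS : forall s, s \in S -> s != b /\ ~~ conf e s b.
  by move=> s; rewrite inE => /andP[/andP[_ ?] ?].
have Hfz : forall z, z \in S -> conf e z (f z).
  move=> z Hz; have := Hf z Hz; rewrite /Pb => /orP[] /blkP [w [m [_ _ H3 H4 [_ H6 _ _]]]];
  by apply: (confI _ H3); rewrite 1?eq_sym // esym.
have G2' : forall s, s \in S -> ~~ conf e (f s) b.
  move=> s Hs; have [sb Hsb] := HS s Hs.
  have := Hf s Hs; rewrite /Pb => /orP[] /blkP [w [m [H1 H2 H3 H4 [H5 H6 H7 H8]]]].
    exact: (G2 esym eirr Hg ua ab ub H1 H2 H3 H4 H5 H6 H7 H8 sb Hsb).
  exact: (G2 esym eirr Hg vc cb vb H1 H2 H3 H4 H5 H6 H7 H8 sb Hsb).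
have G3' : forall s1 s2, s1 \in S -> s2 \in S -> s1 != s2 -> ~~ conf e (f s1) (f s2).
  move=> s1 s2 Hs1 Hs2 s12.
  have := Hf s1 Hs1; have := Hf s2 Hs2; rewrite /Pb.
  move=> /orP[] /blkP [w2 [m2 [H21 H22 H23 H24 [H25 H26 H27 H28]]]];
  move=> /orP[] /blkP [w1 [m1 [H11 H12 H13 H14 [H15 H16 H17 H18]]]].
  - exact: (G3same esym eirr Hg H11 H12 H13 H14 H15 H16 H18 H21 H22 H23 H24 H25 H26 H28 s12).
  - exact: (G3cross esym eirr Hg vc cb ba au vb ub ca vu H11 H12 H13 H14 H15 H16 H18
      H21 H22 H23 H24 H25 H26 H28 H17 H27 s12).
  - exact: (G3cross esym eirr Hg ua ab bc cv ub vb ac uv H11 H12 H13 H14 H15 H16 H18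
      H21 H22 H23 H24 H25 H26 H28 H17 H27 s12).
  - exact: (G3same esym eirr Hg H11 H12 H13 H14 H15 H16 H18 H21 H22 H23 H24 H25 H26 H28 s12).
pose P := b |: (f @: S).
have B : forall x, (x = u \/ x = v) -> forall z, conf e x z -> z != b -> exists2 p, p \in P & conf e z p.
  move=> x Hx z Hz zb; case: (boolP (conf e z b)) => Hzb.
    by exists b; rewrite // !inE eqxx.
  have zS : z \in S.
    rewrite inE Hzb zb !andbT; case: Hx => E; subst x.
      by rewrite confC Hz.
    by rewrite (confC e z v) Hz orbT.
  by exists (f z); [rewrite !inE; apply/orP; right; apply: imset_f | apply: Hfz].
apply: (notU_swap (P := P) (y := b) (x1 := u) (x2 := v)) => //.
- apply/opP => p q; rewrite !inE => /orP[/eqP->|/imsetP[s1 Hs1 ->]] /orP[/eqP->|/imsetP[s2 Hs2 ->]].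
  + by rewrite /conf eqxx.
  + by rewrite confC; apply: G2'.
  + by apply: G2'.
  + case: (eqVneq s1 s2) => [->|s12]; first by rewrite /conf eqxx.
    by apply: G3'.
- by rewrite !inE eqxx.
- have bu : b != u by rewrite eq_sym.
  exact: (confI bu ba ua).
- have bv : b != v by rewrite eq_sym.
  exact: (confI bv bc vc).
- by apply: B; left.
- by apply: B; right.
Qed.

End Final.

Theorem claim3 (T : finType) (e : rel T)
  (esym : symmetric e) (eirr : irreflexive e)
  (Hconn : connected e) (Hdelta : min_degree_one e)
  (Hgirth : girth_at_least e 15) (HU : in_U e) :
  forall u v : T, single_star_support e u -> single_star_support e v ->
    ~ dist_eq e u v 4.
Proof.
move=> u v Hu Hv [[p [Hp Hl Hs]] Hmin].
suff : rho_oL e < rho_o e by rewrite HU ltnn.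
case: Hdelta => Hmd _.
case: p Hp Hl Hs => [|a [|b [|c [|d [|]]]]] //= /and4P[ua ab bc /andP[cd _]] dv _; subst d.
have ub : u != b.
  apply/eqP => E; subst u; move: (Hmin [:: c; v]); rewrite /= bc cd.
  by move=> /(_ isT erefl).
have vb : v != b.
  apply/eqP => E; subst v; move: (Hmin [:: a; b]); rewrite /= ua ab.
  by move=> /(_ isT erefl).
have ac : a != c.
  apply/eqP => E; subst c; move: (Hmin [:: a; v]); rewrite /= ua cd.
  by move=> /(_ isT erefl).
have uv : u != v.
  by apply/eqP => E; subst v; move: (Hmin [::]) => /(_ isT erefl).
have Huv : ~~ conf e u v.
  apply/negP => /confE [_ [k [uk vk]]]; move: (Hmin [:: k; v]).
  by rewrite /= uk (esym k v) vk => /(_ isT erefl).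
have nX : forall x, single_star_support e x ->
    (exists w t, [/\ e x w, e w t, t != x & Defs.support e t]) \/
    (forall w t, e x w -> e w t -> t != x -> ~~ Defs.support e t).
  move=> x _; case: (boolP [exists w, exists t, [&& e x w, e w t, t != x & Defs.support e t]]).
    by move=> /existsP[w /existsP[t /and4P[H1 H2 H3 H4]]]; left; exists w, t.
  move=> H; right => w t H1 H2 H3; apply/negP => H4; move/negP: H; apply.
  by apply/existsP; exists w; apply/existsP; exists t; rewrite H1 H2 H3 H4.
case: (nX u Hu) => [[w [t [H1 H2 H3 H4]]]|nXu].
  exact: (caseX esym Hu H1 H2 H3 H4).
case: (nX v Hv) => [[w [t [H1 H2 H3 H4]]]|nXv].
  exact: (caseX esym Hv H1 H2 H3 H4).
exact: (final esym eirr Hgirth Hu Hv Hmd nXu nXv ua ab bc cd ub vb ac uv Huv).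
Qed.
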